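(* Let $\rho,\sigma$ be quantum states on a $d$-dimensional Hilbert space with $[\rho,\sigma]=0$, and let $\rho',\sigma'$ be quantum states on a $d'$-dimensional Hilbert space with $[\rho',\sigma']=0$, where $\sigma$ and $\sigma'$ are both full-rank. For $1>\epsilon>0$ define $f_\sigma(\rho,\epsilon):=\sqrt{V(\rho\|\sigma)\left(2\epsilon^{-1}-1\right)}$ and analogously $f_{\sigma'}(\rho',\epsilon):=\sqrt{V(\rho'\|\sigma')\left(2\epsilon^{-1}-1\right)}$. If $$S(\rho\|\sigma)-f_\sigma(\rho,\epsilon)\;\geq\; S(\rho'\|\sigma')+f_{\sigma'}(\rho',\epsilon),$$ then $(\rho,\sigma)\succ_\epsilon(\rho',\sigma')$.
   Context: All logarithms are base 2. The relative entropy is $S(\rho\|\sigma)=\mathrm{Tr}(\rho(\log\rho-\log\sigma))$ and the relative variance (variance of relative surprisal) is $V(\rho\|\sigma)=\mathrm{Tr}\left(\rho(\log\rho-\log\sigma)^2\right)-S(\rho\|\sigma)^2$. The trace distance is $D(\rho,\tau)=\frac12\|\rho-\tau\|_1$. For pairs of states, $(\rho,\sigma)\succ(\rho',\sigma')$ means there exists a quantum channel $\mathcal E$ (from states on the first Hilbert space to states on the second) with $\mathcal E(\rho)=\rho'$ and $\mathcal E(\sigma)=\sigma'$. Moreover $(\rho,\sigma)\succ_\epsilon(\rho',\sigma')$ means there exists a state $\rho'_\epsilon$ with $(\rho,\sigma)\succ(\rho'_\epsilon,\sigma')$ and $D(\rho',\rho'_\epsilon)\le\epsilon$. *)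

(* Defs.v *)
From HB Require Import structures.
From mathcomp Require Import all_boot all_order all_algebra.
From mathcomp Require Import complex.
From mathcomp Require Import reals exp.
Set Implicit Arguments. Unset Strict Implicit. Unset Printing Implicit Defensive.
Import Order.TTheory GRing.Theory Num.Theory.
Local Open Scope ring_scope.
Local Open Scope complex_scope.

Section Quantum.
Variable R : realType.
Local Notation C := R[i].

Definition adj {m n} (A : 'M[C]_(m, n)) : 'M[C]_(n, m) := (map_mx Num.conj A)^T.

Definition log2 (x : R) : R := ln x / ln 2.

(* Functional calculus for normal (in particular Hermitian) matrices:
   if A = P^-1 diag(l) P with P unitary (spectral theorem), then
   f(A) := P^-1 diag(f(Re l)) P. *)
Definition mxfun (f : R -> R) {n} (A : 'M[C]_n) : 'M[C]_n :=
  invmx (spectralmx A) *m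
    diag_mx (map_mx (fun z : C => (f (complex.Re z))%:C) (spectral_diag A)) *m spectralmx A.

Definition mxlog2 {n} (A : 'M[C]_n) := mxfun log2 A.

Definition psdmx {n} (A : 'M[C]_n) : Prop :=
  A \is hermsymmx /\ forall v : 'rV[C]_n, 0 <= (v *m A *m adj v) 0 0.

Definition is_state {n} (rho : 'M[C]_n) : Prop := psdmx rho /\ \tr rho = 1.

Definition rel_entropy {n} (rho sigma : 'M[C]_n) : R :=
  complex.Re (\tr (rho *m (mxlog2 rho - mxlog2 sigma))).

Definition rel_variance {n} (rho sigma : 'M[C]_n) : R :=
  complex.Re (\tr (rho *m ((mxlog2 rho - mxlog2 sigma) *m (mxlog2 rho - mxlog2 sigma))))
  - rel_entropy rho sigma ^+ 2.

Definition trnorm {n} (X : 'M[C]_n) : R := complex.Re (\tr (mxfun Num.sqrt (adj X *m X))).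
Definition trdist {n} (rho tau : 'M[C]_n) : R := trnorm (rho - tau) / 2.

Definition is_channel {n n'} (E : 'M[C]_n -> 'M[C]_n') : Prop :=
  exists (m : nat) (K : 'I_m -> 'M[C]_(n', n)),
    \sum_(k < m) adj (K k) *m K k = 1%:M /\
    forall X : 'M[C]_n, E X = \sum_(k < m) K k *m X *m adj (K k).

Definition majorizes {n n'} (rho sigma : 'M[C]_n) (rho' sigma' : 'M[C]_n') : Prop :=
  exists E : 'M[C]_n -> 'M[C]_n', is_channel E /\ E rho = rho' /\ E sigma = sigma'.

Definition majorizes_eps {n n'} (eps : R) (rho sigma : 'M[C]_n)
    (rho' sigma' : 'M[C]_n') : Prop :=
  exists rho'e : 'M[C]_n', majorizes rho sigma rho'e sigma' /\ trdist rho' rho'e <= eps.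

Definition fdev {n} (rho sigma : 'M[C]_n) (eps : R) : R :=
  Num.sqrt (rel_variance rho sigma * (2 / eps - 1)).

End Quantum.

(* Main.v *)
Require Import Defs.
From HB Require Import structures.
From mathcomp Require Import all_boot all_order all_algebra.
From mathcomp Require Import complex.
From mathcomp Require Import reals exp.
From mathcomp Require Import ring lra.
From mathcomp Require Import sequences.
Set Implicit Arguments. Unset Strict Implicit. Unset Printing Implicit Defensive.
Import Order.TTheory GRing.Theory Num.Theory.
Local Open Scope ring_scope.
Section Cl.
Variable R : realType.

Lemma sum_sub_le n (B : pred 'I_n) (f : 'I_n -> R) :
  (forall x, 0 <= f x) -> \sum_(x | B x) f x <= \sum_x f x.
Proof.
move=> f0; rewrite big_mkcond /=; apply: ler_sum => x _.
by case: (B x) => //; exact: f0.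
Qed.

Lemma cheb n (p X : 'I_n -> R) (mu eps : R) (B : pred 'I_n) :
  (forall x, 0 <= p x) -> \sum_x p x = 1 -> mu = \sum_x p x * X x ->
  0 < eps -> eps < 1 ->
  (forall x, B x -> 0 < p x /\
     mu + Num.sqrt ((\sum_y p y * (X y - mu) ^+ 2) * (2 / eps - 1)) < X x) ->
  \sum_(x | B x) p x <= eps.
Proof.
move=> p0 p1 muE e0 e1 HB.
set V := \sum_y p y * (X y - mu) ^+ 2.
have V0 : 0 <= V by apply: sumr_ge0 => y _; apply: mulr_ge0 => //; exact: sqr_ge0.
have k0 : 0 < 2 / eps - 1.
  rewrite subr_gt0 ltr_pdivlMr //; lra.
set t := Num.sqrt (V * (2 / eps - 1)).
have t0 : 0 <= t by exact: sqrtr_ge0.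
have [V00|Vpos] := eqVneq V 0.
  rewrite big1 ?ltW // => x Bx.
  have [px lt] := HB x Bx. rewrite -/V -/t in lt.
  have := V00; rewrite /V => /eqP; rewrite psumr_eq0; last first.
    by move=> y _; apply: mulr_ge0 => //; exact: sqr_ge0.
  move=> /allP /(_ x (mem_index_enum x)) /=; rewrite mulf_eq0 (gt_eqF px) /=.
  rewrite sqrf_eq0 subr_eq0 => /eqP Xx; move: lt; rewrite Xx => lt.
  have : t < 0 by lra.
  by rewrite ltNge t0.
have Vp : 0 < V by rewrite lt_def Vpos V0.
have t2 : t ^+ 2 = V * (2 / eps - 1) by rewrite sqr_sqrtr // mulr_ge0 // ltW.
set PB := \sum_(x | B x) p x.
have PB0 : 0 <= PB by apply: sumr_ge0.
have PB1 : PB * t ^+ 2 <= V.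
  rewrite /PB mulr_suml; apply: (le_trans _ (sum_sub_le B _)); last first.
    by move=> y; apply: mulr_ge0 => //; exact: sqr_ge0.
  apply: ler_sum => x Bx; have [px lt] := HB x Bx; rewrite -/V -/t in lt.
  apply: ler_wpM2l; first exact: ltW.
  have h1 : t <= X x - mu by lra.
  rewrite ler_sqr ?nnegrE //; lra.
move: PB1; rewrite t2 => PB1.
have PB2 : PB * (2 / eps - 1) <= 1.
  by rewrite -(ler_pM2l Vp) mulr1 mulrCA.
have PB3 : PB * (2 - eps) <= eps.
  have -> : PB * (2 - eps) = eps * (PB * (2 / eps - 1)).
    by field; rewrite gt_eqF.
  by rewrite -[X in _ <= X]mulr1 ler_wpM2l // ltW.
nra.
Qed.

Definition Lr n (p q : 'I_n -> R) x := log2 (p x) - log2 (q x).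
Definition Sc n (p q : 'I_n -> R) := \sum_x p x * Lr p q x.
Definition Vc n (p q : 'I_n -> R) := \sum_x p x * Lr p q x ^+ 2 - Sc p q ^+ 2.
Definition fdc n (p q : 'I_n -> R) eps := Num.sqrt (Vc p q * (2 / eps - 1)).
Definition ind (b : bool) : R := if b then 1 else 0.

Lemma var_eq n (p q : 'I_n -> R) : \sum_x p x = 1 ->
  Vc p q = \sum_x p x * (Lr p q x - Sc p q) ^+ 2.
Proof.
move=> p1; rewrite /Vc; set S := Sc p q.
transitivity (\sum_x p x * Lr p q x ^+ 2 - \sum_x (2 * S * (p x * Lr p q x))
   + \sum_x (S ^+ 2 * p x)).
  rewrite -!mulr_sumr p1 /S /Sc; ring.
rewrite -sumrB -big_split /=; apply: eq_bigr => x _; ring.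
Qed.

Lemma ln2_gt0 : 0 < ln (2 : R).
Proof. by apply: ln_gt0; lra. Qed.

Lemma low_bound n (p q : 'I_n -> R) x a : 0 < p x -> 0 < q x ->
  a <= Lr p q x -> q x * expR (a * ln 2) <= p x.
Proof.
move=> px qx; rewrite /Lr /log2 => h.
have l2 := ln2_gt0.
have h2 : a * ln 2 <= ln (p x) - ln (q x).
  have -> : ln (p x) - ln (q x) = (ln (p x) / ln 2 - ln (q x) / ln 2) * ln 2.
    by field; rewrite gt_eqF.
  by rewrite ler_pM2r.
rewrite -ler_ln ?posrE ?mulr_gt0 ?expR_gt0 // lnM ?posrE ?expR_gt0 // expRK.
lra.
Qed.

Lemma up_bound n (p q : 'I_n -> R) x a : 0 < p x -> 0 < q x ->
  Lr p q x <= a -> p x <= expR (a * ln 2) * q x.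
Proof.
move=> px qx; rewrite /Lr /log2 => h.
have l2 := ln2_gt0.
have h2 : ln (p x) - ln (q x) <= a * ln 2.
  have -> : ln (p x) - ln (q x) = (ln (p x) / ln 2 - ln (q x) / ln 2) * ln 2.
    by field; rewrite gt_eqF.
  by rewrite ler_pM2r.
rewrite -ler_ln ?posrE ?mulr_gt0 ?expR_gt0 // lnM ?posrE ?expR_gt0 // expRK.
lra.
Qed.


Lemma indE b : ind b = if b then 1 else 0. Proof. by []. Qed.
Lemma ind_ge0 b : 0 <= ind b. Proof. by case: b => /=; lra. Qed.
Lemma ind_le1 b : ind b <= 1. Proof. by case: b => /=; lra. Qed.

Lemma mass_bound n (p q : 'I_n -> R) eps :
  (forall x, 0 <= p x) -> \sum_x p x = 1 -> 0 < eps -> eps < 1 ->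
  1 - eps <= \sum_x p x * ind ((0 < p x) && (Sc p q - fdc p q eps <= Lr p q x)) /\
  1 - eps <= \sum_x p x * ind ((0 < p x) && (Lr p q x <= Sc p q + fdc p q eps)).
Proof.
move=> p0 p1 e0 e1.
have VE : forall s : R, s = 1 \/ s = -1 ->
    \sum_y p y * (s * Lr p q y - s * Sc p q) ^+ 2 = Vc p q.
  move=> s hs; rewrite var_eq //; apply: eq_bigr => y _.
  by case: hs => ->; rewrite ?mul1r // -mulrBr mulN1r sqrrN.
have key : forall s : R, s = 1 \/ s = -1 ->
   1 - eps <= \sum_x p x * ind ((0 < p x) && ~~ (s * Sc p q + fdc p q eps < s * Lr p q x)).
  move=> s hs.
  have muE : s * Sc p q = \sum_x p x * (s * Lr p q x).
    by rewrite /Sc mulr_sumr; apply: eq_bigr => x _; ring.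
  have h := @cheb n p (fun x => s * Lr p q x) (s * Sc p q) eps
     [pred x | (0 < p x) && (s * Sc p q + fdc p q eps < s * Lr p q x)] p0 p1 muE e0 e1.
  rewrite VE // in h.
  have {h} h : \sum_(x | (0 < p x) && (s * Sc p q + fdc p q eps < s * Lr p q x)) p x <= eps.
    by apply: h => x /andP[].
  suff : 1 <= \sum_x p x * ind ((0 < p x) && ~~ (s * Sc p q + fdc p q eps < s * Lr p q x))
           + \sum_(x | (0 < p x) && (s * Sc p q + fdc p q eps < s * Lr p q x)) p x by lra.
  rewrite -p1 [X in _ + X]big_mkcond /= -big_split /=; apply: ler_sum => x _.
  have := p0 x; rewrite /ind; case: (ltP 0 (p x)) => h1 /= h0; last by case: ltP => /=; lra.
  by case: ltP => /=; lra.
split.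
- apply: (le_trans (key (-1) (or_intror erefl))); apply: ler_sum => x _.
  apply: ler_wpM2l => //; case: (0 < p x) => //=.
  rewrite !mulN1r /ind; case: (leP (Sc p q - fdc p q eps) (Lr p q x)); case: (ltP (- Sc p q + fdc p q eps) (- Lr p q x)) => //= *; lra.
- apply: (le_trans (key 1 (or_introl erefl))); apply: ler_sum => x _.
  apply: ler_wpM2l => //; case: (0 < p x) => //=.
  rewrite !mul1r /ind; case: (leP (Lr p q x) (Sc p q + fdc p q eps)); case: (ltP (Sc p q + fdc p q eps) (Lr p q x)) => //= *; lra.
Qed.


Lemma classical n n' (p q : 'I_n -> R) (p' q' : 'I_n' -> R) eps :
  (forall x, 0 <= p x) -> \sum_x p x = 1 -> (forall x, 0 < q x) -> \sum_x q x = 1 ->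
  (forall y, 0 <= p' y) -> \sum_y p' y = 1 -> (forall y, 0 < q' y) -> \sum_y q' y = 1 ->
  0 < eps -> eps < 1 ->
  Sc p' q' + fdc p' q' eps <= Sc p q - fdc p q eps ->
  exists W : 'I_n -> 'I_n' -> R,
    [/\ (forall x y, 0 <= W x y), (forall x, \sum_y W x y = 1),
        (forall y, \sum_x W x y * q x = q' y) &
        \sum_y `| p' y - \sum_x W x y * p x | <= 2 * eps].
Proof.
move=> p0 p1 q0 q1 p0' p1' q0' q1' e0 e1 H.
set a := Sc p q - fdc p q eps.
pose A x := (0 < p x) && (a <= Lr p q x).
pose A' y := (0 < p' y) && (Lr p' q' y <= Sc p' q' + fdc p' q' eps).
pose pA := \sum_x p x * ind (A x).
pose pA' := \sum_y p' y * ind (A' y).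
have [hA _] := mass_bound q p0 p1 e0 e1.
have [_ hA'] := mass_bound q' p0' p1' e0 e1.
rewrite -/a -/(A _) in hA. 
have hA2 : 1 - eps <= pA by [].
have hA2' : 1 - eps <= pA' by [].
clear hA hA'.
have pA1 : pA <= 1.
  rewrite -p1; apply: ler_sum => x _; rewrite -[X in _ <= X]mulr1.
  by apply: ler_wpM2l => //; exact: ind_le1.
have pA1' : pA' <= 1.
  rewrite -p1'; apply: ler_sum => x _; rewrite -[X in _ <= X]mulr1.
  by apply: ler_wpM2l => //; exact: ind_le1.
have pAp : 0 < pA by lra.
have pAp' : 0 < pA' by lra.
pose K := expR (a * ln 2).
have K0 : 0 < K by exact: expR_gt0.
have bA x : A x -> q x * K <= p x.
  by move=> /andP[px hx]; apply: low_bound.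
have bA' y : A' y -> p' y <= K * q' y.
  move=> /andP[px hx]; apply: up_bound => //; exact: (le_trans hx H).
pose m := Num.min pA pA'.
have mA : m <= pA by rewrite /m ge_min lexx.
have mA' : m <= pA' by rewrite /m ge_min lexx orbT.
have m1 : 1 - eps <= m by rewrite /m le_min hA2 hA2'.
pose c := m / pA.
have c0 : 0 <= c by rewrite /c divr_ge0 //; lra.
have c1 : c <= 1 by rewrite /c ler_pdivrMr // mul1r.
pose T x := c * ind (A x).
have T0 x : 0 <= T x by rewrite /T mulr_ge0 // ind_ge0.
have T1 x : T x <= 1.
  by apply: (le_trans (ler_wpM2l c0 (ind_le1 _))); rewrite mulr1.
pose qT := \sum_x q x * T x.
pose r y := p' y * ind (A' y) / pA'.
pose s y := if qT == 1 then q' y else (q' y - qT * r y) / (1 - qT).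
pose W x y := T x * r y + (1 - T x) * s y.
have r0 y : 0 <= r y by rewrite /r divr_ge0 ?mulr_ge0 ?ind_ge0 //; lra.
have r1 : \sum_y r y = 1.
  by rewrite /r -mulr_suml -/pA' divff // gt_eqF.
have qT0 : 0 <= qT by apply: sumr_ge0 => x _; rewrite mulr_ge0 // ltW.
have qT1 : qT <= 1.
  rewrite -q1; apply: ler_sum => x _; rewrite -[X in _ <= X]mulr1.
  by apply: ler_wpM2l => //; exact: ltW.
have qTb : qT <= m / K.
  have -> : qT = c * \sum_x q x * ind (A x).
    rewrite mulr_sumr; apply: eq_bigr => x _; rewrite /T; ring.
  have -> : m / K = c * (pA / K).
    by rewrite /c; field; rewrite !gt_eqF.
  apply: ler_wpM2l => //; rewrite /pA mulr_suml; apply: ler_sum => x _.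
  rewrite /ind; case hAx: (A x); last by rewrite !mulr0 mul0r.
  by rewrite !mulr1 ler_pdivlMr //; exact: bA.
have key y : qT * r y <= q' y.
  rewrite /r /ind; case hAy: (A' y); last by rewrite mulr0 mul0r mulr0; exact: ltW.
  rewrite mulr1.
  have h1 : qT * (p' y / pA') <= (m / K) * (p' y / pA').
    by apply: ler_wpM2r => //; rewrite divr_ge0 //; lra.
  apply: (le_trans h1).
  have h2 : m / K * (p' y / pA') <= p' y / K.
    have -> : m / K * (p' y / pA') = (m / pA') * (p' y / K).
      by field; rewrite !gt_eqF.
    rewrite -[X in _ <= X]mul1r; apply: ler_wpM2r; first by rewrite divr_ge0 // ltW.
    by rewrite ler_pdivrMr // mul1r.
  apply: (le_trans h2); rewrite ler_pdivrMr // mulrC; exact: bA'.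
have s0 y : 0 <= s y.
  rewrite /s; have [qTe|qTn1] := eqVneq qT 1; first exact: ltW.
  rewrite divr_ge0 //; first by rewrite subr_ge0.
  rewrite subr_ge0 //.
have s1 : \sum_y s y = 1.
  rewrite /s; have [qTe|qTn1] := eqVneq qT 1; first exact: q1'.
  rewrite -mulr_suml sumrB -mulr_sumr r1 q1' mulr1 divff //.
  by rewrite subr_eq0 eq_sym.
have sumW (f : 'I_n -> R) y :
    \sum_x W x y * f x = r y * (\sum_x f x * T x) + s y * (\sum_x f x - \sum_x f x * T x).
  rewrite mulrBr !mulr_sumr -sumrB -big_split /=; apply: eq_bigr => x _.
  rewrite /W; ring.
exists W; split.
- move=> x y; apply: addr_ge0; apply: mulr_ge0; rewrite ?subr_ge0; by [apply: T0 | apply: r0 | apply: T1 | apply: s0].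
- move=> x; rewrite /W big_split /= -!mulr_sumr r1 s1; ring.
- move=> y; rewrite sumW q1 -/qT.
  rewrite /s; have [qT1e|qTn1] := eqVneq qT 1; last first.
    by field; rewrite subr_eq0 eq_sym.
  rewrite qT1e subrr mulr0 addr0 mulr1.
  apply/eqP; rewrite eq_le; apply/andP; split; first by have := key y; rewrite qT1e mul1r.
  have hd : \sum_z (q' z - r z) = 0 by rewrite sumrB q1' r1 subrr.
  have := hd; move/eqP; rewrite psumr_eq0; last first.
    by move=> z _; have := key z; rewrite qT1e mul1r subr_ge0.
  by move=> /allP /(_ y (mem_index_enum y)) /=; rewrite subr_eq0 => /eqP ->.
- have pT : \sum_x p x * T x = m.
    rewrite /T; transitivity (c * pA); last by rewrite /c mulfVK // gt_eqF.
    rewrite /pA mulr_sumr; apply: eq_bigr => x _; ring.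
  under eq_bigr do rewrite sumW pT p1.
  have hb y : `|p' y - (r y * m + s y * (1 - m))| <= (p' y - m * r y) + (1 - m) * s y.
    have hm : m * r y <= p' y.
      rewrite /r /ind; case: (A' y); last by rewrite mulr0 mul0r mulr0.
      rewrite mulr1 mulrCA -[X in _ <= X]mulr1; apply: ler_wpM2l => //.
      by rewrite ler_pdivrMr // mul1r.
    have e : p' y - (r y * m + s y * (1 - m)) = (p' y - m * r y) - ((1 - m) * s y) by ring.
    rewrite e; apply: (le_trans (ler_normB _ _)).
    have m0 : 0 <= 1 - m by lra.
    rewrite !ger0_norm //; try (by apply: mulr_ge0); try (by rewrite subr_ge0).
  apply: (le_trans (ler_sum _ (fun y _ => hb y))).
  rewrite big_split /= sumrB -mulr_sumr -mulr_sumr r1 s1 p1'; lra.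
Qed.

End Cl.

Local Open Scope complex_scope.

Section Q.
Variable R : realType.
Local Notation C := R[i].

Lemma diag_change n (P Q : 'M[C]_n) (a b : 'rV[C]_n) (g : C -> C) :
  P \in unitmx -> Q \in unitmx ->
  invmx Q *m diag_mx b *m Q = invmx P *m diag_mx a *m P ->
  invmx Q *m diag_mx (map_mx g b) *m Q = invmx P *m diag_mx (map_mx g a) *m P.
Proof.
move=> uP uQ h.
set W := Q *m invmx P.
have aux (W0 : 'M[C]_n) : diag_mx b *m W0 = W0 *m diag_mx a ->
    diag_mx (map_mx g b) *m W0 = W0 *m diag_mx (map_mx g a).
  rewrite !mul_diag_mx !mul_mx_diag => /matrixP hW; apply/matrixP => i j.
  move: (hW i j); rewrite !mxE => e.
  have [->|Wn0] := eqVneq (W0 i j) 0; first by rewrite mulr0 mul0r.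
  have : (b 0 i - a 0 j) * W0 i j = 0 by rewrite mulrBl e mulrC subrr.
  by move/eqP; rewrite mulf_eq0 (negPf Wn0) orbF subr_eq0 => /eqP ->; rewrite mulrC.
have hW : diag_mx b *m W = W *m diag_mx a.
  have := congr1 (fun X => Q *m X *m invmx P) h => /=.
  rewrite !mulmxA mulmxV // mul1mx -!mulmxA mulmxV // mulmx1.
  by rewrite /W !mulmxA.
have hW2 : diag_mx (map_mx g b) *m W = W *m diag_mx (map_mx g a).
  exact: aux.
have QE : Q = W *m P by rewrite /W -mulmxA mulVmx // mulmx1.
have iQE : invmx Q *m W = invmx P.
  by rewrite /W mulmxA mulVmx // mul1mx.
rewrite {2}QE mulmxA -[invmx Q *m _ *m W]mulmxA hW2 mulmxA iQE.
by apply: erefl.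
Qed.

Lemma mxfun_conj (f : R -> R) n (P : 'M[C]_n) (a : 'rV[C]_n) :
  P \is unitarymx ->
  mxfun f (invmx P *m diag_mx a *m P) =
  invmx P *m diag_mx (map_mx (fun z : C => (f (complex.Re z))%:C) a) *m P.
Proof.
move=> uP; set A := invmx P *m diag_mx a *m P.
have nA : A \is normalmx.
  by apply/orthomx_spectral_subproof; exists (P, a).
move/orthomx_spectralP: nA => hA.
have := @diag_change n P (spectralmx A) a (spectral_diag A)
   (fun z : C => (f (complex.Re z))%:C) (unitarymx_unit uP) (spectral_unit A).
rewrite -hA => /(_ erefl) h; exact: h.
Qed.

Lemma herm_tr n (M : 'M[C]_n) : M \is hermsymmx -> (M ^t Num.conj)%sesqui = M.
Proof. by move/is_hermitianmxP => h; rewrite {2}h expr0 scale1r. Qed.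

Lemma trig_herm_diag n (N : 'M[C]_n) : (forall i j : 'I_n, (i < j)%N -> N i j = 0) ->
  (N ^t Num.conj)%sesqui = N -> diag_mx (\row_i N i i) = N.
Proof.
move=> tN NH; apply/matrixP => i j; rewrite !mxE.
have [<-|nij] := eqVneq i j; first by rewrite mulr1n.
rewrite mulr0n; case: (ltngtP i j) => [lt|gt|/val_inj e]; first by rewrite tN.
- move/matrixP: NH => /(_ i j); rewrite !mxE => <-.
  by rewrite tN // conjC0.
- by rewrite e eqxx in nij.
Qed.

Lemma trig_diag n (P M : 'M[C]_n) : P \is unitarymx -> M \is hermsymmx ->
  is_trig_mx (conjmx P M) ->
  M = invmx P *m diag_mx (\row_i (P *m M *m invmx P) i i) *m P.
Proof.
move=> uP hM; have Pu := unitarymx_unit uP.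
rewrite conjumx // => /is_trig_mxP tN.
set N := P *m M *m invmx P in tN *.
have NH : (N ^t Num.conj)%sesqui = N.
  rewrite /N invmx_unitary // !trmx_mul !map_mxM trmxCK herm_tr //.
  by rewrite mulmxA.
rewrite trig_herm_diag //.
by rewrite /N !mulmxA mulVmx // mul1mx -mulmxA mulVmx // mulmx1.
Qed.

Lemma codiag n (A B : 'M[C]_n) : A \is hermsymmx -> B \is hermsymmx ->
  A *m B = B *m A ->
  exists P (a b : 'rV[C]_n), [/\ P \is unitarymx,
     A = invmx P *m diag_mx a *m P & B = invmx P *m diag_mx b *m P].
Proof.
move=> hA hB AB. have [P uP /andP[tA tB]] := cotrigonalization2 AB.
have e1 := trig_diag uP hA tA.
have e2 := trig_diag uP hB tB.
exists P, (\row_i (P *m A *m invmx P) i i), (\row_i (P *m B *m invmx P) i i).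
split. exact: uP. exact: e1. exact: e2.
Qed.

End Q.

Section Q3.
Variable R : realType.
Local Notation C := R[i].

Definition dg n (f : 'I_n -> R) : 'M[C]_n := diag_mx (\row_i (f i)%:C).

Lemma dgM n (f g : 'I_n -> R) : dg f *m dg g = dg (fun i => f i * g i).
Proof.
rewrite /dg mulmx_diag; congr diag_mx; apply/rowP => i; rewrite !mxE.
by rewrite rmorphM.
Qed.

Lemma dgB n (f g : 'I_n -> R) : dg f - dg g = dg (fun i => f i - g i).
Proof.
rewrite /dg -raddfB /=; congr diag_mx; apply/rowP => i; rewrite !mxE.
by rewrite rmorphB.
Qed.

Lemma trdg n (f : 'I_n -> R) : \tr (dg f) = (\sum_i f i)%:C.
Proof.
rewrite /dg mxtrace_diag rmorph_sum; apply: eq_bigr => i _; rewrite mxE.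
by [].
Qed.

Lemma cjM n (P X Y : 'M[C]_n) : P \in unitmx ->
  (invmx P *m X *m P) *m (invmx P *m Y *m P) = invmx P *m (X *m Y) *m P.
Proof. by move=> uP; rewrite !mulmxA mulmxK. Qed.

Lemma cjB n (P X Y : 'M[C]_n) :
  invmx P *m X *m P - invmx P *m Y *m P = invmx P *m (X - Y) *m P.
Proof. by rewrite -mulmxBl -mulmxBr. Qed.

Lemma cjtr n (P X : 'M[C]_n) : P \in unitmx -> \tr (invmx P *m X *m P) = \tr X.
Proof. by move=> uP; rewrite mxtrace_mulC mulmxA mulmxV // mul1mx. Qed.

Lemma mxfun_dg (f : R -> R) n (P : 'M[C]_n) (g : 'I_n -> R) :
  P \is unitarymx ->
  mxfun f (invmx P *m dg g *m P) = invmx P *m dg (fun i => f (g i)) *m P.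
Proof.
move=> uP.
have e : map_mx (fun z : C => (f (complex.Re z))%:C) (\row_i (g i)%:C) = \row_i (f (g i))%:C.
  by apply/rowP => i; rewrite !mxE.
have h := mxfun_conj f (\row_i (g i)%:C) uP.
rewrite e in h.
exact: h.
Qed.

Lemma S_eq n (P : 'M[C]_n) (p q : 'I_n -> R) : P \is unitarymx ->
  rel_entropy (invmx P *m dg p *m P) (invmx P *m dg q *m P) = Sc p q.
Proof.
move=> uP; have Pu := unitarymx_unit uP.
rewrite /rel_entropy /mxlog2 (mxfun_dg _ p uP) (mxfun_dg _ q uP).
rewrite (cjB P) (cjM _ _ Pu) dgB dgM (cjtr _ Pu) trdg.
by [].
Qed.

Lemma V_eq n (P : 'M[C]_n) (p q : 'I_n -> R) : P \is unitarymx ->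
  rel_variance (invmx P *m dg p *m P) (invmx P *m dg q *m P) = Vc p q.
Proof.
move=> uP; have Pu := unitarymx_unit uP.
rewrite /rel_variance (S_eq p q uP) /mxlog2 (mxfun_dg _ p uP) (mxfun_dg _ q uP).
rewrite (cjB P) (cjM _ _ Pu) (cjM _ _ Pu) dgB !dgM (cjtr _ Pu) trdg.
rewrite /Vc; congr (_ - _); apply: eq_bigr => i _; rewrite expr2.
Qed.

End Q3.

Section Q4.
Variable R : realType.
Local Notation C := R[i].

Lemma adj_mul m n p (A : 'M[C]_(m, n)) (B : 'M[C]_(n, p)) : adj (A *m B) = adj B *m adj A.
Proof. by rewrite /adj map_mxM trmx_mul. Qed.

Lemma adj_unitary n (P : 'M[C]_n) : P \is unitarymx -> adj P = invmx P.
Proof. by move=> uP; rewrite invmx_unitary // /adj map_trmx. Qed.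

Lemma adj_inv n (P : 'M[C]_n) : P \is unitarymx -> adj (invmx P) = P.
Proof. by move=> uP; rewrite invmx_unitary // /adj map_trmx trmxCK. Qed.

Lemma adj_delta m n (i : 'I_m) (j : 'I_n) : adj (delta_mx i j : 'M[C]_(m, n)) = delta_mx j i.
Proof.
apply/matrixP => a b; rewrite /adj !mxE.
by case: (b == i); case: (a == j) => /=; rewrite ?conjC0 ?conjC1.
Qed.

Lemma adj_dg n (f : 'I_n -> R) : adj (dg f) = dg f.
Proof.
apply/matrixP => a b; rewrite /adj /dg !mxE eq_sym.
case: eqP => [->|_] /=; rewrite ?mulr1n ?mulr0n ?conjC0 //.
first [ by rewrite conj_Creal // /real_complex_def complex_real | by rewrite conj_Creal // -complexr0 complex_real | by rewrite conj_Creal // realE ler0c lecR | by apply/eqP; rewrite eq_complex /= oppr0 !eqxx ].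
Qed.

Lemma psd_diag n (P : 'M[C]_n) (a : 'rV[C]_n) : P \is unitarymx ->
  psdmx (invmx P *m diag_mx a *m P) -> forall i, 0 <= a 0 i.
Proof.
move=> uP [_ h] i; have Pu := unitarymx_unit uP.
have := h (delta_mx 0 i *m P).
rewrite adj_mul adj_unitary // adj_delta.
set d1 : 'rV[C]_n := delta_mx 0 i.
set d2 : 'cV[C]_n := delta_mx i 0.
have -> : d1 *m P *m (invmx P *m diag_mx a *m P) *m (invmx P *m d2)
   = d1 *m diag_mx a *m d2.
  by rewrite !mulmxA !mulmxK.
rewrite /d1 /d2.
rewrite -rowE row_diag_mx -scalemxAl mul_delta_mx !mxE eqxx /=.
by rewrite mulr1.
Qed.

Lemma ge0_real (z : C) : 0 <= z -> z = (complex.Re z)%:C.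
Proof.
move=> h; have := ger0_Im h; case: z h => x y h /= ->.
by [].
Qed.

Lemma rank_diag n (P : 'M[C]_n) (b : 'rV[C]_n) : P \is unitarymx ->
  \rank (invmx P *m diag_mx b *m P) = n -> forall i, b 0 i != 0.
Proof.
move=> uP hr i; have Pu := unitarymx_unit uP.
have : invmx P *m diag_mx b *m P \in unitmx by rewrite -row_free_unit /row_free hr.
rewrite !unitmx_mul => /andP[/andP[_ ud] _].
move: ud; rewrite unitmxE det_diag unitfE => /prodf_neq0 /(_ i isT).
by [].
Qed.

Lemma tr_eq n (P : 'M[C]_n) (f : 'I_n -> R) : P \in unitmx ->
  \tr (invmx P *m dg f *m P) = 1 -> \sum_i f i = 1.
Proof.
move=> Pu; rewrite cjtr // trdg => /(congr1 (@complex.Re R)) /=.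
by [].
Qed.

End Q4.

Lemma sum_pair (V : nmodType) n n' (F : 'I_n * 'I_n' -> V) :
  \sum_(k < #|{: 'I_n * 'I_n'}|) F (enum_val k) = \sum_x \sum_y F (x, y).
Proof.
rewrite -(big_enum_val (A := {: 'I_n * 'I_n'})) /=.
rewrite pair_big /=. apply: eq_bigr => -[x y] _. by [].
Qed.

Section Q5.
Variable R : realType.
Local Notation C := R[i].

Lemma adj_scale m n (c : C) (A : 'M[C]_(m, n)) : adj (c *: A) = Num.conj c *: adj A.
Proof. by rewrite /adj map_mxZ linearZ. Qed.

Lemma conj_realC (x : R) : Num.conj (x%:C) = x%:C.
Proof. by rewrite conj_Creal // -complexr0 complex_real. Qed.

Lemma sandwich n n' (y : 'I_n') (x : 'I_n) (M : 'M[C]_n) :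
  (delta_mx y x : 'M[C]_(n', n)) *m M *m delta_mx x y = M x x *: delta_mx y y.
Proof.
rewrite -[delta_mx y x](mul_delta_mx (0 : 'I_1)) -[delta_mx x y](mul_delta_mx (0 : 'I_1)).
have e : (delta_mx 0 x : 'rV[C]_n) *m M *m delta_mx x 0 = (M x x)%:M.
  rewrite -rowE -colE; apply/matrixP => i j; rewrite !ord1 !mxE.
  by rewrite mulr1n.
have -> : (delta_mx y 0 : 'M[C]_(n', 1)) *m (delta_mx 0 x : 'rV[C]_n) *m M *m
      ((delta_mx x 0 : 'cV[C]_n) *m (delta_mx 0 y : 'rV[C]_n'))
   = (delta_mx y 0 : 'M[C]_(n', 1)) *m ((delta_mx 0 x : 'rV[C]_n) *m M *m (delta_mx x 0 : 'cV[C]_n))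
       *m (delta_mx 0 y : 'rV[C]_n').
  by rewrite !mulmxA.
rewrite e mul_mx_scalar -scalemxAl mul_delta_mx.
by [].
Qed.

Lemma sqrtC_sq (w : R) : 0 <= w -> (Num.sqrt w)%:C * (Num.sqrt w)%:C = w%:C.
Proof. by move=> w0; rewrite -rmorphM -expr2 sqr_sqrtr. Qed.

Lemma channel_ex n n' (P : 'M[C]_n) (P' : 'M[C]_n') (W : 'I_n -> 'I_n' -> R) :
  P \is unitarymx -> P' \is unitarymx ->
  (forall x y, 0 <= W x y) -> (forall x, \sum_y W x y = 1) ->
  exists E : 'M[C]_n -> 'M[C]_n', is_channel E /\
    forall f : 'I_n -> R,
      E (invmx P *m dg f *m P) = invmx P' *m dg (fun y => \sum_x W x y * f x) *m P'.
Proof.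
move=> uP uP' W0 W1; have Pu := unitarymx_unit uP; have Pu' := unitarymx_unit uP'.
pose Kr (z : 'I_n * 'I_n') : 'M[C]_(n', n) :=
  (Num.sqrt (W z.1 z.2))%:C *: (invmx P' *m delta_mx z.2 z.1 *m P).
pose K (k : 'I_#|{: 'I_n * 'I_n'}|) := Kr (enum_val k).
pose E (X : 'M[C]_n) := \sum_k K k *m X *m adj (K k).
have KK x y : adj (Kr (x, y)) *m Kr (x, y) = (W x y)%:C *: (invmx P *m delta_mx x x *m P).
  rewrite /Kr /= adj_scale conj_realC !adj_mul adj_delta adj_inv // adj_unitary //.
  rewrite -scalemxAl -scalemxAr scalerA sqrtC_sq //.
  congr (_ *: _).
  rewrite !mulmxA (mulmxK Pu').
  by rewrite -[invmx P *m delta_mx x y *m delta_mx y x]mulmxA mul_delta_mx.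
have KXK x y X : Kr (x, y) *m X *m adj (Kr (x, y)) =
    ((W x y)%:C * (P *m X *m invmx P) x x) *: (invmx P' *m delta_mx y y *m P').
  rewrite /Kr /= adj_scale conj_realC !adj_mul adj_delta adj_inv // adj_unitary //.
  rewrite -!scalemxAl -!scalemxAr scalerA sqrtC_sq // -scalerA.
  congr (_ *: _).
  transitivity (invmx P' *m (delta_mx y x *m (P *m X *m invmx P) *m delta_mx x y) *m P').
    by rewrite !mulmxA.
  rewrite sandwich -scalemxAr -scalemxAl.
  exact: erefl.
exists E; split.
- exists #|{: 'I_n * 'I_n'}|, K; split; last by move=> X.
  rewrite /K (sum_pair (fun z => adj (Kr z) *m Kr z)).
  under eq_bigr do under eq_bigr do rewrite KK.
  rewrite (eq_bigr (fun x => invmx P *m delta_mx x x *m P)); last first.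
    move=> x _; rewrite -scaler_suml.
    by rewrite -rmorph_sum W1 scale1r.
  by rewrite -mulmx_suml -mulmx_sumr -mx1_sum_delta mulmx1 mulVmx.
- move=> f; rewrite /E /K (sum_pair (fun z => Kr z *m _ *m adj (Kr z))).
  under eq_bigr do under eq_bigr do rewrite KXK.
  have hP : P *m (invmx P *m dg f *m P) *m invmx P = dg f.
    by rewrite !mulmxA (mulmxV Pu) mul1mx (mulmxK Pu).
  have dxx x : dg f x x = (f x)%:C by rewrite /dg !mxE eqxx mulr1n.
  under eq_bigr do under eq_bigr do rewrite hP dxx -rmorphM.
  rewrite exchange_big /= /dg diag_mx_sum_delta mulmx_sumr mulmx_suml.
  apply: eq_bigr => y _; rewrite -scaler_suml -rmorph_sum mxE -scalemxAr -scalemxAl.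
  exact: erefl.
Qed.

End Q5.

Section Q6.
Variable R : realType.
Local Notation C := R[i].

Lemma trdist_dg n (P : 'M[C]_n) (f g : 'I_n -> R) : P \is unitarymx ->
  trdist (invmx P *m dg f *m P) (invmx P *m dg g *m P) = (\sum_i `|f i - g i|) / 2.
Proof.
move=> uP; have Pu := unitarymx_unit uP.
rewrite /trdist /trnorm (cjB P) dgB.
set h := fun i => f i - g i.
have ha : adj (invmx P *m dg h *m P) = invmx P *m dg h *m P.
  by rewrite !adj_mul adj_dg (adj_unitary uP) (adj_inv uP) mulmxA.
rewrite ha (cjM _ _ Pu) dgM (mxfun_dg _ _ uP) (cjtr _ Pu) trdg /=.
congr (_ / 2); apply: eq_bigr => i _; rewrite -expr2 sqrtr_sqr.
by [].
Qed.

Lemma real_diag n (P : 'M[C]_n) (a : 'rV[C]_n) : P \is unitarymx ->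
  psdmx (invmx P *m diag_mx a *m P) ->
  invmx P *m diag_mx a *m P = invmx P *m dg (fun i => complex.Re (a 0 i)) *m P /\
  forall i, 0 <= complex.Re (a 0 i).
Proof.
move=> uP ps; have h := psd_diag uP ps.
have e : a = \row_i (complex.Re (a 0 i))%:C.
  by apply/rowP => i; rewrite mxE; apply: ge0_real.
split; first by rewrite /dg -e.
by move=> i; have := h i; rewrite (ge0_real (h i)) ler0c.
Qed.

End Q6.

Section Q7.
Variable R : realType.
Local Notation C := R[i].

Lemma codiag_dg n (A B : 'M[C]_n) : psdmx A -> psdmx B -> A *m B = B *m A ->
  exists P (p q : 'I_n -> R), [/\ P \is unitarymx, A = invmx P *m dg p *m P,
     B = invmx P *m dg q *m P, forall i, 0 <= p i & forall i, 0 <= q i].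
Proof.
move=> psA psB AB.
have [P [a [b [uP eA eB]]]] := codiag psA.1 psB.1 AB.
rewrite eA in psA; rewrite eB in psB.
have [hA p0] := real_diag uP psA.
have [hB q0] := real_diag uP psB.
exists P, (fun i => complex.Re (a 0 i)), (fun i => complex.Re (b 0 i)).
split.
- exact: uP.
- rewrite eA; exact: hA.
- rewrite eB; exact: hB.
- exact: p0.
- exact: q0.
Qed.

End Q7.

Local Close Scope complex_scope.

Theorem theorem8 (R : realType) (d d' : nat)
  (rho sigma : 'M[R[i]]_d) (rho' sigma' : 'M[R[i]]_d') (eps : R) :
  is_state rho -> is_state sigma -> rho *m sigma = sigma *m rho ->
  is_state rho' -> is_state sigma' -> rho' *m sigma' = sigma' *m rho' ->
  \rank sigma = d -> \rank sigma' = d' ->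
  0 < eps -> eps < 1 ->
  rel_entropy rho sigma - fdev rho sigma eps >= rel_entropy rho' sigma' + fdev rho' sigma' eps ->
  majorizes_eps eps rho sigma rho' sigma'.
Proof.
move=> [psA trA] [psB trB] AB [psA' trA'] [psB' trB'] AB' rB rB' e0 e1 H.
have [P [p [q [uP eA eB p0 q0]]]] := codiag_dg psA psB AB.
have [P' [p' [q' [uP' eA' eB' p0' q0']]]] := codiag_dg psA' psB' AB'.
have Pu := unitarymx_unit uP; have Pu' := unitarymx_unit uP'.
subst rho sigma rho' sigma'.
have p1 := tr_eq Pu trA.
have q1 := tr_eq Pu trB.
have p1' := tr_eq Pu' trA'.
have q1' := tr_eq Pu' trB'.
have qp : forall i, 0 < q i.
  move=> i; have := rank_diag uP rB i; rewrite mxE => hq.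
  rewrite lt_def q0 andbT; apply: contraNneq hq => ->; by rewrite rmorph0.
have qp' : forall i, 0 < q' i.
  move=> i; have := rank_diag uP' rB' i; rewrite mxE => hq.
  rewrite lt_def q0' andbT; apply: contraNneq hq => ->; by rewrite rmorph0.
move: H; rewrite /fdev (S_eq p q uP) (S_eq p' q' uP') (V_eq p q uP) (V_eq p' q' uP') => H.
have [W [W0 W1 Wq Wp]] := classical p0 p1 qp q1 p0' p1' qp' q1' e0 e1 H.
have [E [chE hE]] := channel_ex uP uP' W0 W1.
exists (invmx P' *m dg (fun y => \sum_x W x y * p x) *m P'); split.
  exists E; split; first exact: chE.
  split; first exact: hE.
  have e : dg (fun y => \sum_x W x y * q x) = dg q'.
    by rewrite /dg; congr diag_mx; apply/rowP => y; rewrite !mxE Wq.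
  rewrite -e; exact: hE.
rewrite (trdist_dg _ _ uP').
have half (x e : R) : x <= 2 * e -> x / 2 <= e by move=> h; lra.
apply: half; exact: Wp.
Qed.
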